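(* Let $1<p<\infty$ and $q=p/(p-1)$. Then for all $u,v\ge0$ and all $\beta\in(0,1)$, $$\min\left\{\frac1{\beta p},\frac1{(1-\beta)q}\right\}\left(\beta u^p+(1-\beta)v^q-u^{\beta p}v^{(1-\beta)q}\right)\le\frac{u^p}{p}+\frac{v^q}{q}-uv\le\max\left\{\frac1{\beta p},\frac1{(1-\beta)q}\right\}\left(\beta u^p+(1-\beta)v^q-u^{\beta p}v^{(1-\beta)q}\right).$$ *)

(* Defs.v *)
From Stdlib Require Import Reals.
Open Scope R_scope.

(* Real power x^y for x >= 0 and y > 0, with the convention 0^y = 0.
   (Stdlib's Rpower is exp (y * ln x), which gives 1 at x = 0.) *)
Definition rpow (x y : R) : R := if Req_EM_T x 0 then 0 else Rpower x y.

(* Main.v *)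
Require Import Defs.
From Stdlib Require Import Reals Lra Psatz.
Open Scope R_scope.

Lemma conv (s r t : R) : 0 <= t <= 1 ->
  exp (t*s+(1-t)*r) <= t*exp s + (1-t)*exp r.
Proof.
  intros [Ht0 Ht1].
  set (m := t*s+(1-t)*r).
  assert (Es : exp s = exp m * exp (s - m)) by (rewrite <- exp_plus; f_equal; ring).
  assert (Er : exp r = exp m * exp (r - m)) by (rewrite <- exp_plus; f_equal; ring).
  pose proof (exp_ineq1_le (s-m)). pose proof (exp_ineq1_le (r-m)).
  pose proof (exp_pos m).
  assert (A1 : 0 <= t * (exp m * (exp (s-m) - (1 + (s-m))))).
  { apply Rmult_le_pos; [lra|]. apply Rmult_le_pos; lra. }
  assert (A2 : 0 <= (1-t) * (exp m * (exp (r-m) - (1 + (r-m))))).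
  { apply Rmult_le_pos; [lra|]. apply Rmult_le_pos; lra. }
  rewrite Es, Er.
  assert (Hz : t*(s-m)+(1-t)*(r-m) = 0) by (unfold m; ring).
  assert (exp m = exp m * (t*(1+(s-m)) + (1-t)*(1+(r-m)))).
  { replace (t*(1+(s-m)) + (1-t)*(1+(r-m))) with (1 + (t*(s-m)+(1-t)*(r-m))) by ring.
    rewrite Hz; ring. }
  nra.
Qed.

Definition F (x y l : R) := l*exp x + (1-l)*exp y - exp (l*x+(1-l)*y).

Lemma Fsym x y l : F x y l = F y x (1-l).
Proof. unfold F. replace ((1-l)*y + (1-(1-l))*x) with (l*x+(1-l)*y) by ring. ring. Qed.

Lemma Fnonneg x y b : 0 <= b <= 1 -> 0 <= F x y b.
Proof. intros H. unfold F. pose proof (conv x y b H). lra. Qed.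

Lemma core x y th b : 0 < th -> th <= b -> b < 1 ->
  th/b * F x y b <= F x y th /\ F x y th <= (1-th)/(1-b) * F x y b.
Proof.
  intros h0 h1 h2. split.
  - set (t := th/b).
    assert (tb : th = t*b) by (unfold t; field; lra).
    assert (t0 : 0 <= t <= 1).
    { unfold t; split. apply Rlt_le, Rdiv_lt_0_compat; lra.
      apply Rmult_le_reg_r with b; [lra|]. unfold Rdiv. rewrite Rmult_assoc, Rinv_l; lra. }
    pose proof (conv (b*x+(1-b)*y) y t t0) as C.
    replace (t * (b * x + (1 - b) * y) + (1 - t) * y) with (th*x+(1-th)*y) in C
      by (rewrite tb; ring).
    unfold F. rewrite tb in *. nra.
  - set (s := (1-b)/(1-th)).
    assert (sb : 1-b = s*(1-th)) by (unfold s; field; lra).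
    assert (s0 : 0 <= s <= 1).
    { unfold s; split. apply Rlt_le, Rdiv_lt_0_compat; lra.
      apply Rmult_le_reg_r with (1-th); [lra|]. unfold Rdiv. rewrite Rmult_assoc, Rinv_l; lra. }
    assert (spos : 0 < s).
    { unfold s. apply Rdiv_lt_0_compat; lra. }
    pose proof (conv (th*x+(1-th)*y) x s s0) as C.
    replace (s * (th*x+(1-th)*y) + (1 - s) * x) with (b*x+(1-b)*y) in C
      by (replace b with (1 - s*(1-th)) by lra; ring).
    assert (K : s * F x y th <= F x y b).
    { unfold F. replace b with (1 - s*(1-th)) by lra.
      replace (1 - s*(1-th)) with b by lra. replace (1 - b) with (s*(1-th)) by lra.
      replace (1 - b) with (s*(1-th)) in C by lra. nra. }
    apply Rmult_le_reg_l with s; [lra|].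
    replace (s * ((1 - th) / (1 - b) * F x y b)) with (F x y b) by (unfold s; field; lra).
    exact K.
Qed.

Lemma mainF x y th b : 0 < th < 1 -> 0 < b < 1 ->
  Rmin (th/b) ((1-th)/(1-b)) * F x y b <= F x y th /\
  F x y th <= Rmax (th/b) ((1-th)/(1-b)) * F x y b.
Proof.
  intros Ht Hb. pose proof (Fnonneg x y b ltac:(lra)).
  destruct (Rle_lt_dec th b) as [Hle|Hlt].
  - destruct (core x y th b ltac:(lra) Hle ltac:(lra)) as [A B]. split.
    + eapply Rle_trans; [|exact A]. apply Rmult_le_compat_r; [lra|apply Rmin_l].
    + eapply Rle_trans; [exact B|]. apply Rmult_le_compat_r; [lra|apply Rmax_r].
  - destruct (core y x (1-th) (1-b) ltac:(lra) ltac:(lra) ltac:(lra)) as [A B].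
    assert (E1 : F y x (1-th) = F x y th) by (rewrite Fsym; f_equal; ring).
    assert (E2 : F y x (1-b) = F x y b) by (rewrite Fsym; f_equal; ring).
    rewrite E1, E2 in A, B.
    replace (1-(1-th)) with th in B by ring.
    replace (1-(1-b)) with b in B by ring.
    split.
    + eapply Rle_trans; [|exact A]. apply Rmult_le_compat_r; [lra|apply Rmin_r].
    + eapply Rle_trans; [exact B|]. apply Rmult_le_compat_r; [lra|apply Rmax_l].
Qed.

Lemma rpow0 y : rpow 0 y = 0.
Proof. unfold rpow. destruct (Req_EM_T 0 0); [reflexivity|contradiction]. Qed.

Lemma rpow_pos x y : 0 < x -> rpow x y = exp (y * ln x).
Proof. intros H. unfold rpow. destruct (Req_EM_T x 0); [lra|reflexivity]. Qed.

Lemma rpow_nonneg x y : 0 <= rpow x y.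
Proof. unfold rpow. destruct (Req_EM_T x 0); [lra|]. unfold Rpower. apply Rlt_le, exp_pos. Qed.

Theorem corollary3p1 (p q u v beta : R)
  (hp : 1 < p) (hq : q = p / (p - 1))
  (hu : 0 <= u) (hv : 0 <= v) (hb0 : 0 < beta) (hb1 : beta < 1) :
  Rmin (1 / (beta * p)) (1 / ((1 - beta) * q)) *
    (beta * rpow u p + (1 - beta) * rpow v q
       - rpow u (beta * p) * rpow v ((1 - beta) * q))
  <= rpow u p / p + rpow v q / q - u * v
  /\
  rpow u p / p + rpow v q / q - u * v
  <= Rmax (1 / (beta * p)) (1 / ((1 - beta) * q)) *
    (beta * rpow u p + (1 - beta) * rpow v q
       - rpow u (beta * p) * rpow v ((1 - beta) * q)).
Proof.
  assert (qpos : 0 < q) by (rewrite hq; apply Rdiv_lt_0_compat; lra).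
  set (A := 1 / (beta * p)). set (B := 1 / ((1 - beta) * q)).
  destruct (Req_dec u 0) as [Hu0|Hu0].
  { subst u. rewrite !rpow0. pose proof (rpow_nonneg v q).
    assert (E : B * ((1-beta)*rpow v q) = rpow v q / q) by (unfold B; field; lra).
    split.
    - replace (beta * 0 + (1 - beta) * rpow v q - 0 * rpow v ((1 - beta) * q))
        with ((1-beta)*rpow v q) by ring.
      replace (0 / p + rpow v q / q - 0 * v) with (B * ((1-beta)*rpow v q)) by (rewrite E; field; lra).
      apply Rmult_le_compat_r; [nra|apply Rmin_r].
    - replace (beta * 0 + (1 - beta) * rpow v q - 0 * rpow v ((1 - beta) * q))
        with ((1-beta)*rpow v q) by ring.
      replace (0 / p + rpow v q / q - 0 * v) with (B * ((1-beta)*rpow v q)) by (rewrite E; field; lra).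
      apply Rmult_le_compat_r; [nra|apply Rmax_r]. }
  destruct (Req_dec v 0) as [Hv0|Hv0].
  { subst v. rewrite !rpow0. pose proof (rpow_nonneg u p).
    assert (E : A * (beta*rpow u p) = rpow u p / p) by (unfold A; field; lra).
    split.
    - replace (beta * rpow u p + (1 - beta) * 0 - rpow u (beta * p) * 0)
        with (beta*rpow u p) by ring.
      replace (rpow u p / p + 0 / q - u * 0) with (A * (beta*rpow u p)) by (rewrite E; field; lra).
      apply Rmult_le_compat_r; [nra|apply Rmin_l].
    - replace (beta * rpow u p + (1 - beta) * 0 - rpow u (beta * p) * 0)
        with (beta*rpow u p) by ring.
      replace (rpow u p / p + 0 / q - u * 0) with (A * (beta*rpow u p)) by (rewrite E; field; lra).
      apply Rmult_le_compat_r; [nra|apply Rmax_l]. }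
  assert (up : 0 < u) by lra. assert (vp : 0 < v) by lra.
  set (x := p * ln u). set (y := q * ln v). set (th := 1/p).
  assert (th0 : 0 < th < 1).
  { unfold th; split. apply Rdiv_lt_0_compat; lra.
    apply Rmult_lt_reg_r with p; [lra|]. unfold Rdiv. rewrite Rmult_assoc, Rinv_l; lra. }
  rewrite !rpow_pos by assumption.
  assert (E1 : exp (p * ln u) / p + exp (q * ln v) / q - u * v = F x y th).
  { unfold F, x, y, th.
    assert (uv : u * v = exp (ln u + ln v)) by (rewrite exp_plus, !exp_ln; auto).
    rewrite uv. replace (ln u + ln v) with (1 / p * (p * ln u) + (1 - 1 / p) * (q * ln v))
      by (rewrite hq; field; lra).
    rewrite hq; field; lra. }
  assert (E2 : beta * exp (p * ln u) + (1 - beta) * exp (q * ln v) -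
      exp (beta * p * ln u) * exp ((1 - beta) * q * ln v) = F x y beta).
  { unfold F, x, y. rewrite <- exp_plus. replace (beta*p*ln u + (1-beta)*q*ln v) with (beta*(p*ln u) + (1-beta)*(q*ln v)) by ring. reflexivity. }
  assert (EA : A = th / beta) by (unfold A, th; field; lra).
  assert (EB : B = (1 - th) / (1 - beta)) by (unfold B, th; rewrite hq; field; lra).
  rewrite E1, E2, EA, EB.
  apply mainF; lra.
Qed.
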